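(* Let $Q$ be a non-trivial free abelian pro-$p$ group of finite rank and let $Y$ be the set of all epimorphisms of pro-$p$ groups $\varphi:Q\to Q_1$, where $Q_1\cong\mathbb{Z}_p$. For $\varphi\in Y$ let $\hat\varphi:\mathbb{F}_p[[Q]]\to\mathbb{F}_p[[Q_1]]$ be the continuous ring homomorphism induced by $\varphi$. Then $\bigcap_{\varphi\in Y}\ker(\hat\varphi)=0$.
   Context: $\mathbb{F}_p[[Q]]$ denotes the completed group algebra of the pro-$p$ group $Q$ over $\mathbb{F}_p$. *)

(* Defs.v *)
From HB Require Import structures.
From mathcomp Require Import all_boot all_order all_algebra.
Set Implicit Arguments. Unset Strict Implicit. Unset Printing Implicit Defensive.
Import GRing.Theory.

(* p-adic integers Z_p, modelled as compatible sequences of residues:  *)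
(* x k is the residue of x modulo p^k (so 0 <= x k < p^k), and          *)
(* x (k+1) reduces to x k modulo p^k.                                   *)
Definition is_zp (p : nat) (x : nat -> nat) : Prop :=
  forall k, (x k < p ^ k)%N /\ (x k.+1 %% p ^ k)%N = x k.

Definition zadd (p : nat) (x y : nat -> nat) : nat -> nat :=
  fun k => ((x k + y k) %% p ^ k)%N.

Definition natzp (p m : nat) : nat -> nat := fun k => (m %% p ^ k)%N.

(* The free abelian pro-p group Q = Z_p^n of rank n. *)
Definition isQ (p n : nat) (x : 'I_n -> nat -> nat) : Prop :=
  forall i, is_zp p (x i).

Definition qadd (p n : nat) (x y : 'I_n -> nat -> nat) : 'I_n -> nat -> nat :=
  fun i => zadd p (x i) (y i).

(* it maps Q into Z_p, is additive, continuous (for the p-adic          *)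
(* topologies, whose basic neighbourhoods of 0 are p^k Z_p), and onto.  *)
Definition is_epi (p n : nat) (phi : ('I_n -> nat -> nat) -> (nat -> nat)) : Prop :=
  [/\ (forall x, isQ p x -> is_zp p (phi x)),
      (forall x y, isQ p x -> isQ p y ->
          forall k, phi (qadd p x y) k = zadd p (phi x) (phi y) k),
      (forall k, exists m, forall x y, isQ p x -> isQ p y ->
          (forall i, x i m = y i m) -> phi x k = phi y k)
    & (forall z, is_zp p z -> exists2 x, isQ p x & forall k, phi x k = z k)].

(* Completed group algebra F_p[[Q]] = lim_k F_p[Q / p^k Q],             *)
(* with Q / p^k Q = (Z/p^k)^n.  An element of level k of the group       *)
(* algebra F_p[(Z/p^k)^n] is a function (Z/p^k)^n -> F_p.                *)
Definition lvl (p n k : nat) : finType := {ffun 'I_n -> 'I_(p ^ k)}.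

Definition cga_raw (p n : nat) : Type :=
  forall k : nat, {ffun lvl p n k -> 'F_p}.

(* compatibility with the transition maps F_p[Q/p^(k+1)Q] -> F_p[Q/p^kQ] *)
Definition is_cga (p n : nat) (f : cga_raw p n) : Prop :=
  forall (k : nat) (g : lvl p n k),
    f k g = (\sum_(h : lvl p n k.+1 | [forall i, (h i %% p ^ k)%N == g i]) f k.+1 h)%R.

(* The map Q/p^kQ -> Z_p/p^kZ_p induced by phi (computed on the lift    *)
(* of a residue class to Q given by natural-number representatives).    *)
Definition phi_lvl (p n : nat) (phi : ('I_n -> nat -> nat) -> (nat -> nat))
  (k : nat) (g : lvl p n k) : nat :=
  phi (fun i => natzp p (g i)) k.

(* The induced map hat phi : F_p[[Q]] -> F_p[[Z_p]] = lim F_p[Z/p^k],   *)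
(* at level k: the linear extension of phi_lvl.                         *)
Definition hatphi_lvl (p n : nat) (phi : ('I_n -> nat -> nat) -> (nat -> nat))
  (f : cga_raw p n) (k : nat) (c : nat) : 'F_p :=
  (\sum_(g : lvl p n k | phi_lvl phi g == c) f k g)%R.

Definition in_ker (p n : nat) (phi : ('I_n -> nat -> nat) -> (nat -> nat))
  (f : cga_raw p n) : Prop :=
  forall k c, hatphi_lvl phi f k c = 0%R.

(* Main.v *)
From Stdlib Require Import FunctionalExtensionality.
From HB Require Import structures.
Require Import Defs.
From mathcomp Require Import all_boot all_order all_algebra.
From mathcomp Require Import ring zify.
Set Implicit Arguments. Unset Strict Implicit. Unset Printing Implicit Defensive.
Import GRing.Theory.
Local Open Scope ring_scope.

Lemma frobX (R : comNzRingType) (p : nat) (pc : p \in [pchar R]) (i : nat) (x y : R) :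
  (x - y) ^+ (p ^ i) = x ^+ (p ^ i) - y ^+ (p ^ i).
Proof.
elim: i => [|i IH]; first by rewrite !expn0 !expr1.
rewrite expnSr !exprM IH.
by rewrite -!(pFrobenius_autE pc) pFrobenius_autB_comm //; exact: mulrC.
Qed.

Lemma char_poly (R : nzRingType) (p : nat) : p \in [pchar R] -> p \in [pchar {poly R}].
Proof.
rewrite !inE => /andP[pp /eqP h]; rewrite pp /= -polyC_natr h.
by rewrite polyC0.
Qed.

Definition cls (R : nzRingType) (m j0 : nat) (q : {poly R}) : R :=
  \sum_(i < size q | (i %% m)%N == j0) q`_i.

Lemma cls_bound (R : nzRingType) m j0 (q : {poly R}) B : (size q <= B)%N ->
  cls m j0 q = \sum_(i < B | (i %% m)%N == j0) q`_i.
Proof.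
move=> hB; rewrite /cls (big_ord_widen_cond _ (fun i => ((i %% m)%N == j0)) (fun i => q`_i) hB).
rewrite [RHS]big_mkcond [LHS]big_mkcond; apply: eq_bigr => i _.
case: ((i %% m)%N == j0) => //=; case: ltnP => // hi.
by rewrite nth_default.
Qed.

Lemma cls0 (R : nzRingType) m j0 : cls m j0 (0 : {poly R}) = 0.
Proof. by rewrite /cls size_poly0 big_ord0. Qed.

Lemma clsD (R : nzRingType) m j0 (q1 q2 : {poly R}) :
  cls m j0 (q1 + q2) = cls m j0 q1 + cls m j0 q2.
Proof.
set B := maxn (size q1) (size q2).
rewrite (@cls_bound _ _ _ _ B) ?size_polyD //.
rewrite (@cls_bound _ _ _ q1 B) ?leq_maxl // (@cls_bound _ _ _ q2 B) ?leq_maxr //.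
rewrite -big_split; apply: eq_bigr => i _; by rewrite coefD.
Qed.

Lemma clsN (R : nzRingType) m j0 (q : {poly R}) : cls m j0 (- q) = - cls m j0 q.
Proof.
rewrite (@cls_bound _ _ _ _ (size q)) ?size_polyN // /cls -sumrN.
by apply: eq_bigr => i _; rewrite coefN.
Qed.

Lemma clsB (R : nzRingType) m j0 (q1 q2 : {poly R}) :
  cls m j0 (q1 - q2) = cls m j0 q1 - cls m j0 q2.
Proof. by rewrite clsD clsN. Qed.

Lemma cls_sum (R : nzRingType) m j0 (I : finType) (F : I -> {poly R}) :
  cls m j0 (\sum_i F i) = \sum_i cls m j0 (F i).
Proof. exact: (big_morph _ (@clsD R m j0) (@cls0 R m j0)). Qed.

Lemma clsCM (R : nzRingType) m j0 (c : R) (q : {poly R}) :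
  cls m j0 (c%:P * q) = c * cls m j0 q.
Proof.
rewrite (@cls_bound _ _ _ _ (size q)); last first.
  by rewrite mul_polyC size_scale_leq.
rewrite /cls mulr_sumr; apply: eq_bigr => i _; by rewrite coefCM.
Qed.

Lemma clsXnM (R : nzRingType) m j0 (q : {poly R}) : (0 < m)%N ->
  cls m j0 ('X^m * q) = cls m j0 q.
Proof.
move=> m0.
rewrite (@cls_bound _ _ _ _ (m + size q)); last first.
  apply: leq_trans (size_polyMleq _ _) _; by rewrite size_polyXn.
rewrite (@cls_bound _ _ _ q (size q + m)) ?leq_addr //.
rewrite big_split_ord /= big1 ?add0r; last first.
  by move=> i _; rewrite coefXnM /= ltn_ord.
rewrite big_split_ord /= [X in _ = _ + X]big1 ?addr0; last first.
  by move=> i _; rewrite nth_default //= leq_addr.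
apply: eq_big => i /=; first by rewrite modnDl.
by move=> _; rewrite coefXnM ltnNge leq_addr /= addKn.
Qed.

Lemma cls_Xn (R : nzRingType) m j0 b : cls m j0 ('X^b : {poly R}) = ((b %% m)%N == j0)%:R.
Proof.
rewrite /cls size_polyXn big_mkcond big_ord_recr /= coefXn eqxx.
rewrite big1 ?add0r; last first.
  by move=> i _; rewrite coefXn eq_sym (ltn_eqF (ltn_ord i)); case: ifP.
by case: ((b %% m)%N == j0).
Qed.
Lemma xm1_exp p (hp : prime p) i :
  ('X - 1 : {poly 'F_p}) ^+ (p ^ i) = 'X^(p ^ i) - 1.
Proof.
have pc : p \in [pchar {poly 'F_p}].
  by rewrite inE hp /= -polyC_natr pchar_Fp_0 // polyC0.
by rewrite (frobX pc) expr1n.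
Qed.

Lemma diff_fact p (hp : prime p) i j : (i < j)%N ->
  exists V : {poly 'F_p}, 'X^(p ^ j) - 'X^(p ^ i) = ('X - 1) ^+ (p ^ i) * V /\ ~~ root V 1.
Proof.
move=> ij.
have pc : p \in [pchar {poly 'F_p}].
  by rewrite inE hp /= -polyC_natr pchar_Fp_0 // polyC0.
have p0 : (0 < p)%N by rewrite prime_gt0.
set q := (p ^ (j - i))%N.
have q1 : (1 <= q.-1)%N.
  rewrite /q -ltnS prednK ?expn_gt0 ?p0 //.
  apply: leq_trans (prime_gt1 hp) _.
  by rewrite -{1}(expn1 p) leq_pexp2l // subn_gt0.
set W : {poly 'F_p} := 'X * \sum_(l < q.-1) 'X ^+ l.
have eW : 'X^q - 'X = ('X - 1) * W.
  rewrite /W mulrCA -subrX1 mulrBr mulr1 -exprS prednK //.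
  by rewrite /q expn_gt0 p0.
exists (W ^+ (p ^ i)); split.
  rewrite -exprMn -eW (frobX pc) -!exprM; congr (_ - _).
  by rewrite -expnD subnK // ltnW.
rewrite /root horner_exp /W hornerM hornerX mul1r horner_sum.
under eq_bigr => l _ do rewrite hornerXn expr1n.
rewrite sumr_const card_ord expf_eq0 negb_and; apply/orP; right.
rewrite -(dvdn_charf (pchar_Fp hp)).
apply/negP => hd.
have : (p %| q)%N by rewrite /q dvdn_exp // subn_gt0.
move=> hq.
have : (p %| q - q.-1)%N by rewrite dvdn_sub.
rewrite -subn1 subKn; last by rewrite /q expn_gt0 p0.
by rewrite dvdn1 => /eqP p1; move: (prime_gt1 hp); rewrite p1.
Qed.

Lemma xm1_neq0 p : ('X - 1 : {poly 'F_p}) != 0.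
Proof. by rewrite -polyC1 polyXsubC_eq0. Qed.

Lemma peel1 p (hp : prime p) i j B (h : {poly 'F_p}) : (i < j)%N ->
  ('X - 1) ^+ B %| ('X^(p ^ j) - 'X^(p ^ i)) * h -> ('X - 1) ^+ (B - p ^ i) %| h.
Proof.
move=> ij; have [V [eV rV]] := diff_fact hp ij.
rewrite eV -mulrA mulrC -mulrA.
have cV : coprimep (('X - 1 : {poly 'F_p}) ^+ B) V.
  apply: coprimep_expl; rewrite coprimep_sym -polyC1 coprimep_XsubC //.
rewrite Gauss_dvdpr // mulrC.
case: (leqP B (p ^ i)) => hB.
  by move: hB; rewrite -subn_eq0 => /eqP ->; rewrite expr0 dvd1p.
rewrite -{1}(subnKC (ltnW hB)) exprD dvdp_mul2l //.
by rewrite expf_neq0 // xm1_neq0.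
Qed.

Definition rr p i : {poly 'F_p} := 'X^(p ^ i).
Definition Sf p l := (\sum_(i < l) p ^ i)%N.
Definition Lf p j := (\sum_(l < j) Sf p l)%N.

Lemma peel_prod p (hp : prime p) j l B (h : {poly 'F_p}) : (l <= j)%N ->
  ('X - 1) ^+ B %| (\prod_(i < l) (rr p j - rr p i)) * h ->
  ('X - 1) ^+ (B - Sf p l) %| h.
Proof.
elim: l B h => [|l IH] B h lj.
  by rewrite big_ord0 mul1r /Sf big_ord0 subn0.
rewrite big_ord_recr /= -mulrA => hd.
have := IH _ _ (ltnW lj) hd.
move/(peel1 hp lj); by rewrite /Sf big_ord_recr /= subnDA.
Qed.

Definition Dv p s (E : {poly {poly 'F_p}}) := forall i, ('X - 1) ^+ s %| E`_i.
Arguments Dv : clear implicits.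

Lemma Dv0 p s : Dv p s 0.
Proof. by move=> i; rewrite coef0 dvdp0. Qed.

Lemma DvD p s E1 E2 : Dv p s E1 -> Dv p s E2 -> Dv p s (E1 + E2).
Proof. by move=> h1 h2 i; rewrite coefD dvdp_add. Qed.

Lemma Dv_mono p s s' E : (s' <= s)%N -> Dv p s E -> Dv p s' E.
Proof. by move=> ss h i; apply: dvdp_trans (h i); exact: dvdp_exp2l. Qed.

Lemma DvMC p s (Q : {poly {poly 'F_p}}) c : ('X - 1) ^+ s %| c -> Dv p s (Q * c%:P).
Proof. by move=> hc i; rewrite coefMC dvdp_mull. Qed.

Lemma dvdp_big (R : idomainType) (I : Type) (r : seq I) (P : pred I) (F : I -> {poly R}) d :
  (forall i, P i -> d %| F i) -> d %| \sum_(i <- r | P i) F i.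
Proof. move=> h; apply: (big_ind (fun x => d %| x)); [exact: dvdp0 | exact: dvdp_add | exact: h]. Qed.

Lemma Dv_horner p s E (x : {poly 'F_p}) : Dv p s E -> ('X - 1) ^+ s %| E.[x].
Proof.
move=> h; rewrite horner_coef; apply: dvdp_big => i _.
by apply: dvdp_mulr.
Qed.

Lemma peel p (hp : prime p) (G : {poly {poly 'F_p}}) (P N : nat) :
  (forall M, (M < N)%N -> ('X - 1) ^+ P %| G.[rr p M]) ->
  forall j, (j <= N)%N -> exists H E,
    G = (\prod_(i < j) ('X - (rr p i)%:P)) * H + E /\ Dv p (P - Lf p j) E.
Proof.
move=> hG; elim=> [|j IH] jN.
  by exists G, 0; rewrite big_ord0 mul1r addr0; split => //; exact: Dv0.
have [H [E [eG DE]]] := IH (ltnW jN).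
have hj := hG _ jN.
rewrite {1}eG hornerD hornerM horner_prod in hj.
have hE := Dv_horner (rr p j) DE.
have hj' : ('X - 1) ^+ (P - Lf p j) %| (\prod_(i < j) ('X - (rr p i)%:P).[rr p j]) * H.[rr p j].
  rewrite -(dvdp_addl _ hE); apply: dvdp_trans hj; exact: dvdp_exp2l (leq_subr _ _).
have epr : \prod_(i < j) ('X - (rr p i)%:P).[rr p j] = \prod_(i < j) (rr p j - rr p i).
  by apply: eq_bigr => i _; rewrite hornerXsubC.
rewrite epr in hj'.
have hc := peel_prod hp (leqnn j) hj'.
set c := H.[rr p j] in hc.
have : root (H - c%:P) (rr p j) by rewrite /root hornerD hornerN hornerC subrr.
case/factor_theorem => Q eQ.
exists Q, (\prod_(i < j) ('X - (rr p i)%:P) * c%:P + E); split.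
  rewrite {1}eG; have -> : H = Q * ('X - (rr p j)%:P) + c%:P by rewrite -eQ subrK.
  by rewrite big_ord_recr /= mulrDr addrA [Q * _]mulrC mulrA.
apply: DvD.
  apply: DvMC; apply: dvdp_trans hc; apply: dvdp_exp2l.
  by rewrite /Lf big_ord_recr /= subnDA.
apply: Dv_mono DE; by rewrite /Lf big_ord_recr /= leq_sub2l // leq_addr.
Qed.

Fixpoint Gr (R : comNzRingType) (x y : R) (s : nat) (z : R) : Prop :=
  match s with
  | 0 => True
  | s'.+1 => exists u v, [/\ Gr x y s' u, Gr x y s' v & z = x * u + y * v]
  end.

Lemma Gr_mul (R : comNzRingType) (x y : R) s z w : Gr x y s z -> Gr x y s (z * w).
Proof.
elim: s z w => [//|s IH] z w [u [v [gu gv ->]]].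
exists (u * w), (v * w); split; [exact: IH | exact: IH | by rewrite mulrDl !mulrA].
Qed.

Lemma Gr_prod (R : comNzRingType) (x y : R) (c : nat -> R) N :
  Gr x y N (\prod_(i < N) (y - x * c i)).
Proof.
elim: N => [//|N IH]; rewrite big_ord_recr /=.
set z := \prod_(i < N) _ in IH *.
exists (z * - c N), z; split => //; first exact: Gr_mul.
by ring.
Qed.

Lemma Gr_split (R : comNzRingType) (x y : R) s z : Gr x y s z ->
  forall a b, (a + b = s.+1)%N -> exists u v, z = x ^+ a * u + y ^+ b * v.
Proof.
elim: s z => [|s IH] z gz a b hab.
  case: a hab => [|a] hab; first by exists z, 0; rewrite expr0 mul1r mulr0 addr0.
  case: b hab => [|b] hab; first by exists 0, z; rewrite expr0 mul1r mulr0 add0r.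
  by move: hab; rewrite addSn addnS.
case: a hab => [|a] hab; first by exists z, 0; rewrite expr0 mul1r mulr0 addr0.
case: b hab => [|b] hab; first by exists 0, z; rewrite expr0 mul1r mulr0 add0r.
case: gz => u [v [gu gv ->]].
have h1 : (a + b.+1 = s.+1)%N by lia.
have h2 : (a.+1 + b = s.+1)%N by lia.
have [u1 [v1 e1]] := IH u gu a b.+1 h1.
have [u2 [v2 e2]] := IH v gv a.+1 b h2.
exists (u1 + y * u2), (x * v1 + v2); rewrite e1 e2 !exprS.
move: (x ^+ a) (y ^+ b) => xa yb; ring.
Qed.

Lemma cls_kill p (hp : prime p) l i0 (c : {poly 'F_p}) :
  ('X - 1) ^+ (p ^ l) %| c -> cls (p ^ l) i0 c = 0.
Proof.
case/dvdpP => Q ->; rewrite xm1_exp // mulrBr mulr1 clsB [Q * _]mulrC clsXnM ?subrr //.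
by rewrite expn_gt0 prime_gt0.
Qed.

Lemma ym_exp p (hp : prime p) l :
  ('X - 1 : {poly {poly 'F_p}}) ^+ (p ^ l) = 'X^(p ^ l) - 1.
Proof.
have pc : p \in [pchar {poly {poly 'F_p}}].
  by rewrite inE hp /= -polyC_natr -polyC_natr pchar_Fp_0 // !polyC0.
by rewrite (frobX pc) expr1n.
Qed.

Lemma hornerG p (T : finType) (mu : T -> 'F_p) (A B : T -> nat) M :
  (\sum_t (mu t *: 'X^(A t))%:P * 'X^(B t) : {poly {poly 'F_p}}).[rr p M] =
  \sum_t mu t *: 'X^(A t + p ^ M * B t).
Proof.
rewrite horner_sum; apply: eq_bigr => t _.
rewrite hornerM hornerC hornerXn /rr -exprM -scalerAl -exprD //.
Qed.

Lemma stepA p (hp : prime p) (T : finType) (mu : T -> 'F_p) (e : T -> nat) l1 :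
  (forall w, \sum_t mu t * (((e t %% p ^ l1)%N == w)%:R) = 0) ->
  ('X - 1) ^+ (p ^ l1) %| \sum_t mu t *: 'X^(e t).
Proof.
move=> hw; set P := (p ^ l1)%N.
have -> : \sum_t mu t *: 'X^(e t) =
   \sum_t mu t *: 'X^(e t %% P) + \sum_t mu t *: ('X^(e t) - 'X^(e t %% P)).
  by rewrite -big_split /=; apply: eq_bigr => t _; rewrite -scalerDr addrC subrK.
have -> : \sum_t mu t *: 'X^(e t %% P) = 0 :> {poly 'F_p}.
  apply/polyP => w; rewrite coef_sum coef0; apply: etrans (hw w); apply: eq_bigr => t _.
  by rewrite coefZ coefXn eq_sym.
rewrite add0r; apply: dvdp_big => t _.
rewrite -mul_polyC; apply: dvdp_mull.
rewrite {1}(divn_eq (e t) P) exprD mulnC exprM.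
have -> : forall a c : {poly 'F_p}, a * c - c = (a - 1) * c by move=> a c; rewrite mulrBl mul1r.
apply: dvdp_mulr; rewrite subrX1 xm1_exp //; exact: dvdp_mulr.
Qed.

Lemma L2 p (hp : prime p) (T : finType) (mu : T -> 'F_p) (A B : T -> nat) (l l1 : nat) :
  (p ^ l + Lf p (2 * p ^ l).-1 <= p ^ l1)%N ->
  (forall M w, (M < (2 * p ^ l).-1)%N ->
     \sum_t mu t * ((((A t + p ^ M * B t) %% p ^ l1)%N == w)%:R) = 0) ->
  forall i0 j0, \sum_t mu t * ((((A t %% p ^ l)%N == i0) && ((B t %% p ^ l)%N == j0))%:R) = 0.
Proof.
move=> hsz hyp i0 j0.
set m := (p ^ l)%N in hsz hyp *; set N := (2 * m).-1 in hsz hyp *; set P := (p ^ l1)%N in hsz hyp.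
have m0 : (0 < m)%N by rewrite expn_gt0 prime_gt0.
set G : {poly {poly 'F_p}} := \sum_t (mu t *: 'X^(A t))%:P * 'X^(B t).
have hA : forall M, (M < N)%N -> ('X - 1) ^+ P %| G.[rr p M].
  move=> M hM; rewrite hornerG.
  apply: (stepA hp (e := fun t => (A t + p ^ M * B t)%N)) => w; exact: hyp.
have [H [E [eG DE]]] := peel hp hA (leqnn N).
pose tau (Z : {poly {poly 'F_p}}) := cls m i0 (cls m j0 Z).
have tauD : forall Z1 Z2, tau (Z1 + Z2) = tau Z1 + tau Z2 by move=> *; rewrite /tau !clsD.
have tauG : tau G = \sum_t mu t * ((((A t %% m)%N == i0) && ((B t %% m)%N == j0))%:R).
  rewrite /tau /G cls_sum cls_sum; apply: eq_bigr => t _.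
  rewrite clsCM cls_Xn; case: ((B t %% m)%N == j0) => /=.
    by rewrite mulr1 -mul_polyC clsCM cls_Xn andbT.
  by rewrite mulr0 cls0 andbF mulr0.
have tauE : tau E = 0.
  rewrite /tau; apply: cls_kill => //; rewrite /cls; apply: dvdp_big => i _.
  apply: dvdp_trans (DE i); apply: dvdp_exp2l; rewrite -/m; lia.
have tx : forall Z, tau ((('X - 1) ^+ m)%:P * Z) = 0.
  move=> Z; rewrite /tau clsCM; apply: cls_kill => //; exact: dvdp_mulr.
have ty : forall Z, tau (('X - 1) ^+ m * Z) = 0.
  move=> Z; rewrite /tau ym_exp // mulrBl mul1r clsB clsXnM // subrr cls0 //.
have eP : \prod_(i < N) ('X - (rr p i)%:P) =
    \prod_(i < N) (('X - 1) - (('X - 1 : {poly 'F_p})%:P) * (('X - 1) ^+ (p ^ i).-1)%:P).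
  apply: eq_bigr => i _; rewrite -polyCM -exprS prednK ?expn_gt0 ?prime_gt0 //.
  by rewrite xm1_exp // rmorphB /= polyC1 /rr opprB addrA subrK.
have gP := Gr_prod (('X - 1 : {poly 'F_p})%:P) ('X - 1) (fun i => (('X - 1) ^+ (p ^ i).-1)%:P) N.
have [u [v euv]] := Gr_split gP (a := m) (b := m) (ltac:(rewrite /N; lia)).
have tauPi : tau (\prod_(i < N) ('X - (rr p i)%:P) * H) = 0.
  rewrite eP euv mulrDl -!mulrA tauD -rmorphXn /= tx ty addr0 //.
rewrite -tauG eG tauD tauPi tauE addr0 //.
Qed.

Lemma decomp1 (R : nzRingType) m x (F : nat -> R) : (x < m)%N ->
  F x = \sum_(a0 < m) F a0 * ((x == a0)%:R).
Proof.
move=> hx; rewrite (bigD1 (Ordinal hx)) //= eqxx mulr1 big1 ?addr0 // => i hi.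
case: eqP => [e|]; last by rewrite mulr0.
by move: hi; rewrite -val_eqE /= e eqxx.
Qed.

Lemma decomp2 (R : nzRingType) m x y (F : nat -> nat -> R) : (x < m)%N -> (y < m)%N ->
  F x y = \sum_(a0 < m) \sum_(b0 < m) F a0 b0 * (((x == a0) && (y == b0))%:R).
Proof.
move=> hx hy; rewrite (decomp1 (F ^~ y) hx); apply: eq_bigr => a0 _.
rewrite (decomp1 (F a0) hy) mulr_suml; apply: eq_bigr => b0 _.
by case: (x == a0); case: (y == b0); rewrite ?mulr0 ?mulr1 ?mul0r.
Qed.

Definition cf p n (d : nat) (M : nat -> nat) (j : 'I_n) : nat :=
  if val j == 0%N then 1%N else if (d <= val j)%N then (p ^ M (val j))%N else 0%N.
Definition aa p n d M l (g : 'I_n -> nat) : nat :=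
  ((\sum_j cf p d M j * g j)%N %% p ^ l)%N.
Definition pr p n d l (g : 'I_n -> nat) : 'I_n -> nat :=
  fun i => if (0 < val i)%N && (val i < d)%N then (g i %% p ^ l)%N else 0%N.
Definition Qp p n (T : finType) (mu : T -> 'F_p) (gv : T -> 'I_n -> nat) d l :=
  forall M (psi : nat -> ('I_n -> nat) -> 'F_p),
    \sum_t mu t * psi (aa p d M l (gv t)) (pr p d l (gv t)) = 0.
Arguments cf : clear implicits.
Arguments aa : clear implicits.
Arguments pr : clear implicits.
Arguments Qp : clear implicits.

Definition need p l := (p ^ l + Lf p (2 * p ^ l).-1)%N.

Lemma stepQ p (hp : prime p) n (T : finType) (mu : T -> 'F_p) (gv : T -> 'I_n -> nat)
  d (hd : (d < n)%N) (d1 : (0 < d)%N) l l1 :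
  (l <= l1)%N -> (need p l <= p ^ l1)%N ->
  Qp p n T mu gv d l1 -> Qp p n T mu gv d.+1 l.
Proof.
move=> ll1 hsz hQ M psi.
set dI : 'I_n := Ordinal hd.
set m := (p ^ l)%N.
have m0 : (0 < m)%N by rewrite expn_gt0 prime_gt0.
have dvm : (m %| p ^ l1)%N by rewrite dvdn_exp2l.
pose A t := aa p n d.+1 M l1 (gv t).
pose Bf t := gv t dI.
pose Z t := pr p n d l (gv t).
pose upd (z : 'I_n -> nat) (v : nat) : 'I_n -> nat := fun i => if i == dI then v else z i.
have f1 : forall t, aa p n d.+1 M l (gv t) = (A t %% m)%N.
  by move=> t; rewrite /A /aa modn_dvdm.
have f2 : forall t, pr p n d.+1 l (gv t) = upd (Z t) (Bf t %% m)%N.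
  move=> t; apply: functional_extensionality => i; rewrite /upd /Z /pr /Bf.
  case: (eqVneq i dI) => [->|ne] /=; first by rewrite d1 ltnSn.
  rewrite ltnS (leq_eqVlt (val i)).
  have -> : (val i == d) = false.
    by apply: (contraNF _ ne) => /eqP e; apply/eqP; apply: val_inj.
  by [].
under eq_bigr => t _ do rewrite f1 f2.
have e2 : forall t, psi (A t %% m)%N (upd (Z t) (Bf t %% m)%N) =
  \sum_(a0 < m) \sum_(b0 < m) psi a0 (upd (Z t) b0) *
     ((((A t %% m)%N == a0) && ((Bf t %% m)%N == b0))%:R).
  move=> t; apply: (decomp2 (fun a b => psi a (upd (Z t) b))); exact: ltn_pmod.
under eq_bigr => t _ do rewrite e2 mulr_sumr.
rewrite exchange_big /=; apply: big1 => a0 _.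
under eq_bigr => t _ do rewrite mulr_sumr.
rewrite exchange_big /=; apply: big1 => b0 _.
under eq_bigr => t _ do rewrite mulrA.
apply: (L2 hp (mu := fun t => mu t * psi a0 (upd (Z t) b0)) (A := A) (B := Bf) (l1 := l1)) => //.
move=> M' w hM'.
pose M'' := fun j => if j == d then M' else M j.
have ea : forall t, aa p n d M'' l1 (gv t) = ((A t + p ^ M' * Bf t) %% p ^ l1)%N.
  move=> t; rewrite /A /aa modnDml; congr (_ %% _)%N.
  rewrite (bigD1 dI) //= (bigD1 dI (P := xpredT)) //= /cf /=.
  have -> : (d == 0%N) = false by rewrite eqn0Ngt d1.
  rewrite leqnn ltnn /M'' eqxx mul0n add0n addnC /Bf; congr (_ + _)%N.
  apply: eq_bigr => j hj; case: ifP => // _.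
  have jd : (val j == d) = false by apply/negP => /eqP e; move: hj; rewrite -val_eqE /= e eqxx.
  by rewrite jd ltn_neqAle eq_sym jd.
have ez : forall t, Z t = (fun i => (pr p n d l1 (gv t) i %% m)%N).
  move=> t; apply: functional_extensionality => i; rewrite /Z /pr.
  by case: ifP => _; rewrite ?mod0n ?modn_dvdm.
have := hQ M'' (fun a z => psi a0 (upd (fun i => (z i %% m)%N) b0) * ((a == w)%:R)).
move=> h; apply: etrans h; apply: eq_bigr => t _; rewrite ea -ez mulrA //.
Qed.

Lemma chain p (hp : prime p) n e : (e.+1 <= n)%N -> forall l, exists L, (l <= L)%N /\
  forall mu : lvl p n L -> 'F_p,
    Qp p n (lvl p n L) mu (fun g i => val (g i)) 1 L ->
    Qp p n (lvl p n L) mu (fun g i => val (g i)) e.+1 l.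
Proof.
elim: e => [|e IH] hen l; first by exists l.
set l1 := need p l.
have [L [l1L hL]] := IH (ltnW hen) l1.
have hl1 : (need p l <= p ^ l1)%N by apply: ltnW; apply: ltn_expl; exact: prime_gt1.
have ll1 : (l <= l1)%N.
  apply: leq_trans (leq_addr _ _); apply: ltnW; apply: ltn_expl; exact: prime_gt1.
exists L; split; first exact: leq_trans l1L.
move=> mu hmu; apply: (@stepQ p hp n _ mu _ e.+1 hen (ltn0Sn e) l l1 ll1 hl1); exact: hL.
Qed.

Definition phiM p n (M : nat -> nat) : ('I_n -> nat -> nat) -> nat -> nat :=
  fun x k => ((\sum_j cf p n 1 M j * x j k)%N %% p ^ k)%N.
Arguments phiM : clear implicits.

Lemma baseQ p (hp : prime p) n (f : cga_raw p n) L :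
  (forall M, in_ker (phiM p n M) f) ->
  Qp p n (lvl p n L) (f L) (fun g i => val (g i)) 1 L.
Proof.
move=> hk M psi.
have epr : forall g : lvl p n L, pr p n 1 L (fun i => val (g i)) = (fun _ => 0%N).
  move=> g; apply: functional_extensionality => i; rewrite /pr.
  by case: (val i) => [|j].
under eq_bigr => g _ do rewrite epr.
have ea : forall g : lvl p n L, aa p n 1 M L (fun i => val (g i)) = phi_lvl (phiM p n M) g.
  move=> g; rewrite /phi_lvl /phiM /aa /natzp; congr (_ %% _)%N.
  by apply: eq_bigr => j _; rewrite modn_small.
have hlt : forall g : lvl p n L, (aa p n 1 M L (fun i => val (g i)) < p ^ L)%N.
  by move=> g; rewrite /aa ltn_pmod // expn_gt0 prime_gt0.
under eq_bigr => g _ do rewrite (decomp1 (fun a => psi a (fun _ => 0%N)) (hlt g)) mulr_sumr.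
rewrite exchange_big /=; apply: big1 => c _.
have := hk M L c; rewrite /hatphi_lvl big_mkcond /= => h.
transitivity (psi c (fun _ => 0%N) *
  \sum_(g : lvl p n L) (if phi_lvl (phiM p n M) g == c then f L g else 0)); last by rewrite h mulr0.
rewrite mulr_sumr; apply: eq_bigr => g _.
rewrite ea; case: (phi_lvl (phiM p n M) g == c); by rewrite ?mulr1 ?mulr0 // mulrC.
Qed.

Lemma iterc p (hp : prime p) n (f : cga_raw p n) (hf : is_cga f) k (g : lvl p n k) d :
  f k g = \sum_(h : lvl p n (d + k) | [forall i, (h i %% p ^ k)%N == g i]) f (d + k) h.
Proof.
have p0 : (0 < p)%N by exact: prime_gt0.
elim: d => [|d IH].
  rewrite /= (big_pred1 g) // => h /=.
  apply/forallP/eqP => [H|->]; last by move=> i; rewrite modn_small.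
  apply/ffunP => i; apply: val_inj => /=; move/eqP: (H i); rewrite modn_small //.
rewrite IH.
set K := (d + k)%N.
have pK : (0 < p ^ K)%N by rewrite expn_gt0 p0.
pose red (h : lvl p n K.+1) : lvl p n K := [ffun i => Ordinal (ltn_pmod (val (h i)) pK)].
have dk : (p ^ k %| p ^ K)%N by rewrite dvdn_exp2l // leq_addl.
have dK : (p ^ K %| p ^ K.+1)%N by rewrite dvdn_exp2l.
change (\sum_(h : lvl p n K | [forall i, (h i %% p ^ k)%N == g i]) f K h =
  \sum_(h : lvl p n K.+1 | [forall i, (h i %% p ^ k)%N == g i]) f K.+1 h).
rewrite (partition_big red (fun h' : lvl p n K => [forall i, (h' i %% p ^ k)%N == g i])); last first.
  move=> h /forallP H; apply/forallP => i; rewrite ffunE /= modn_dvdm //; exact: H.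
apply: eq_bigr => h' /forallP qh'; rewrite hf; apply: eq_bigl => h.
apply/forallP/andP => [H|[_ /eqP <-] i]; last by rewrite ffunE.
split.
  apply/forallP => i; rewrite -(modn_dvdm _ dk) (eqP (H i)); exact: qh'.
apply/eqP/ffunP => i; apply: val_inj; rewrite ffunE /=; by move/eqP: (H i).
Qed.

Lemma summod n (c x : 'I_n -> nat) d :
  ((\sum_j c j * x j) %% d = (\sum_j c j * (x j %% d)) %% d)%N.
Proof.
rewrite -[LHS]modn_summ -[RHS]modn_summ; congr (_ %% _)%N.
by apply: eq_bigr => j _; rewrite modnMmr.
Qed.

Lemma epiM p (hp : prime p) n (hn : (0 < n)%N) M : @is_epi p n (phiM p n M).
Proof.
split.
- move=> x hx k; split; first by rewrite /phiM ltn_pmod // expn_gt0 prime_gt0.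
  rewrite /phiM modn_dvdm ?dvdn_exp2l // summod [in RHS]summod.
  congr (_ %% _)%N; apply: eq_bigr => j _.
  by rewrite (proj2 (hx j k)) (modn_small (proj1 (hx j k))).
- move=> x y hx hy k; rewrite /phiM /zadd /qadd modnDm /zadd.
  rewrite -(summod (fun j => cf p n 1 M j) (fun j => x j k + y j k)) -big_split /=.
  congr (_ %% _)%N.
  by apply: eq_bigr => j _; rewrite mulnDr.
- move=> k; exists k => x y _ _ hxy; rewrite /phiM; congr (_ %% _)%N.
  by apply: eq_bigr => j _; rewrite hxy.
- move=> z hz.
  exists (fun i : 'I_n => if val i == 0%N then z else (fun _ => 0%N)).
    move=> i; case: (val i == 0%N) => //.
    by move=> k; rewrite expn_gt0 prime_gt0 // mod0n.
  move=> k; rewrite /phiM (bigD1 (Ordinal hn)) //= big1 ?addn0.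
    by rewrite /cf /= mul1n modn_small //; exact: (proj1 (hz k)).
  move=> j hj; have -> : (val j == 0%N) = false.
    by apply: (contraNF _ hj) => /eqP e; apply/eqP; apply: val_inj.
  by rewrite muln0.
Qed.

Theorem lemma7p1 (p n : nat) (hp : prime p) (hn : (0 < n)%N)
  (f : cga_raw p n) (hf : is_cga f) :
  (forall phi : ('I_n -> nat -> nat) -> (nat -> nat), @is_epi p n phi -> in_ker phi f) ->
  forall (k : nat) (g : lvl p n k), f k g = 0%R.
Proof.
move=> hall k g0.
have hker : forall M, in_ker (phiM p n M) f := fun M => hall _ (epiM hp hn M).
have hen : ((n.-1).+1 <= n)%N by rewrite prednK.
have [L [kL hL]] := chain hp hen k.
rewrite prednK // in hL.
have eL : L = (L - k + k)%N by rewrite subnK.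
move: hL; rewrite eL; move: (L - k)%N => d hL.
have hQ := hL (f (d + k)%N) (baseQ hp (d + k)%N hker).
rewrite (iterc hp hf g0 d).
set i0 : 'I_n := Ordinal hn.
have := hQ (fun _ => 0%N) (fun a z => (((a == g0 i0) &&
   [forall i : 'I_n, (0 < val i)%N ==> (z i == g0 i)]))%:R).
move=> h; rewrite big_mkcond /= -[RHS]h; apply: eq_bigr => h' _.
have ea : aa p n n (fun _ => 0%N) k (fun i => val (h' i)) = (h' i0 %% p ^ k)%N.
  rewrite /aa (bigD1 i0) //= big1 ?addn0 /cf /= ?mul1n //.
  move=> j hj; have -> : (val j == 0%N) = false.
    by apply: (contraNF _ hj) => /eqP e; apply/eqP; apply: val_inj.
  by rewrite leqNgt ltn_ord.
rewrite ea.
have -> : ((h' i0 %% p ^ k)%N == g0 i0) &&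
   [forall i : 'I_n, (0 < val i)%N ==> (pr p n n k (fun i => val (h' i)) i == g0 i)] =
   [forall i, (h' i %% p ^ k)%N == g0 i].
  apply/andP/forallP => [[h0 /forallP hi] i|H].
    case: (posnP (val i)) => [e|ip].
      by have -> : i = i0 by apply: val_inj.
    by move: (hi i); rewrite ip /pr ip ltn_ord.
  split; first exact: H.
  by apply/forallP => i; apply/implyP => ip; rewrite /pr ip ltn_ord /=; exact: H.
by case: [forall i, _]; rewrite ?mulr1 ?mulr0.
Qed.
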